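(* Let $\lambda_1,\lambda_2>0$. For $\nu\in(0,1)$ define, for $\theta\in\mathbb{R}$, $$\Psi^{(1)}_{\nu,\underline{\lambda}}(\theta):=\begin{cases}(\lambda_1(e^\theta-1))^{1/\nu} & \text{if } \theta\geq0,\\ (\lambda_2(e^{-\theta}-1))^{1/\nu} & \text{if } \theta<0,\end{cases}$$ $$\Psi^{(2)}_{\nu,\underline{\lambda}}(\theta):=\begin{cases}(\lambda_1(e^\theta-1)+\lambda_2(e^{-\theta}-1))^{1/\nu} & \text{if } \lambda_1(e^\theta-1)+\lambda_2(e^{-\theta}-1)\geq0,\\ 0 & \text{otherwise},\end{cases}$$ and for $k\in\{1,2\}$ let $I^{(k)}_{\mathrm{LD},\nu}(x):=\sup_{\theta\in\mathbb{R}}\{\theta x-\Psi^{(k)}_{\nu,\underline{\lambda}}(\theta)\}$. Let $\nu,\eta\in(0,1)$ with $\eta<\nu$. Then, for each $k\in\{1,2\}$, $I^{(k)}_{\mathrm{LD},\eta}(0)=I^{(k)}_{\mathrm{LD},\nu}(0)=0$ and there exists $\delta>0$ such that $I^{(k)}_{\mathrm{LD},\eta}(x)>I^{(k)}_{\mathrm{LD},\nu}(x)>0$ for all $x$ with $0<|x|<\delta$.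
   Context: In the paper, $I^{(1)}_{\mathrm{LD},\nu}$ and $I^{(2)}_{\mathrm{LD},\nu}$ are the large deviation rate functions (speed $t$) of $Y(t)/t$ and $Z(t)/t$ for the fractional Skellam processes of type 1 (with $\nu_1=\nu_2=\nu$) and type 2 respectively; the claim concerns only the explicitly defined functions above. *)

(* Defs.v *)
From HB Require Import structures.
From mathcomp Require Import all_boot all_order all_algebra.
From mathcomp Require Import all_classical all_reals all_analysis.
Set Implicit Arguments. Unset Strict Implicit. Unset Printing Implicit Defensive.
Import Order.TTheory GRing.Theory Num.Theory.
Local Open Scope ring_scope.
Local Open Scope classical_set_scope.

Definition Psi1 (R : realType) (l1 l2 nu theta : R) : R :=
  if 0 <= theta then powR (l1 * (expR theta - 1)) nu^-1
  else powR (l2 * (expR (- theta) - 1)) nu^-1.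

Definition Psi2 (R : realType) (l1 l2 nu theta : R) : R :=
  let a := l1 * (expR theta - 1) + l2 * (expR (- theta) - 1) in
  if 0 <= a then powR a nu^-1 else 0.

Definition legendre (R : realType) (Psi : R -> R) (x : R) : \bar R :=
  ereal_sup [set ((theta * x - Psi theta)%:E) | theta in [set: R]].

Definition ILD (R : realType) (k : nat) (l1 l2 nu x : R) : \bar R :=
  legendre (if k == 1%N then Psi1 l1 l2 nu else Psi2 l1 l2 nu) x.

(* Main.v *)
Require Import Defs.
From HB Require Import structures.
From mathcomp Require Import all_boot all_order all_algebra.
From mathcomp Require Import all_classical all_reals all_analysis.
From mathcomp Require Import ring lra.
Import Order.TTheory GRing.Theory Num.Theory.
Local Open Scope ring_scope.
Local Open Scope classical_set_scope.
Set Implicit Arguments. Unset Strict Implicit. Unset Printing Implicit Defensive.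

Definition Fsup (R : realType) (G : R -> R) (p x : R) : \bar R :=
  ereal_sup [set ((theta * x - powR (G theta) p)%:E) | theta in [set: R]].

Lemma Fsup0 (R : realType) (G : R -> R) (p : R) : p != 0 -> (forall t, 0 <= G t) ->
  G 0 = 0 -> Fsup G p 0 = 0%E.
Proof.
move=> p0 G0 Gz; apply/eqP; rewrite eq_le; apply/andP; split.
- apply: ge_ereal_sup => _ [t _ <-]; rewrite lee_fin mulr0 sub0r oppr_le0; exact: powR_ge0.
- apply: ereal_sup_ubound; exists 0 => //; by rewrite Gz powR0 // mulr0 subr0.
Qed.
Ltac lra' := repeat match goal with
  | H : forall _, _ |- _ => clear H
  | H : is_true (@Order.le _ (extended _) _ _) |- _ => clear H
  | H : is_true (@Order.lt _ (extended _) _ _) |- _ => clear H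
  | H : is_true (_ \is a fin_num) |- _ => clear H
  end; lra.
Lemma Fsup_strict (R : realType) (G : R -> R) (T m L p q x : R) :
  0 < T -> 0 < m -> 1 <= L -> 1 < p -> p < q ->
  (forall t, 0 <= G t) -> G 0 = 0 ->
  (forall t, T <= `|t| -> 1 <= G t /\ m * `|t| <= G t) ->
  (forall t d, `|t| <= T -> `|d| <= 1 -> G (t + d) <= G t + L * `|d|) ->
  0 < `|x| -> `|x| <= m -> `|x| * T <= 2^-1 ->
  (0 < Fsup G p x)%E /\ (Fsup G p x < Fsup G q x)%E.
Proof.
move=> T0 m0 L1 p1 pq G0 Gz Ggrow Glip x0 xm xT.
set f := fun t => t * x - G t `^ p.
have p0 : 0 < p by lra'.
have tx t : t * x <= `|t| * `|x|.
  by rewrite -normrM; apply: ler_norm.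
have fle t : f t <= T * `|x| /\ (0 < f t -> `|t| < T).
  have Gp0 := powR_ge0 (G t) p.
  have Tx0 : 0 <= T * `|x| by apply: mulr_ge0; lra'.
  have := tx t; rewrite /f.
  case: (leP T `|t|) => hT txt.
  - have [G1 Gm] := Ggrow t hT.
    have GGp : G t <= G t `^ p := le1r_powR G1 (ltW p1).
    have : `|t| * `|x| <= m * `|t| by rewrite mulrC; apply: ler_wpM2r.
    move=> h; split; first lra'.
    lra'.
  - have : `|t| * `|x| <= T * `|x| by apply: ler_wpM2r => //; lra'.
    lra'.
set c := `|x| / (4 * L).
have c0 : 0 < c by apply: divr_gt0 => //; lra'.
set b := Num.min 1 (c `^ (p - 1)^-1).
have b0 : 0 < b by rewrite lt_min ltr01 powR_gt0.
have b1 : b <= 1 by rewrite ge_min lexx.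
have bp : b `^ p <= b * c.
  rewrite -(mulr_powRB1 (ltW b0) p0); apply: ler_wpM2l; first exact: ltW.
  have -> : c = (c `^ (p - 1)^-1) `^ (p - 1).
    by rewrite -powRrM mulVf ?powRr1 //; [exact: ltW | lra'].
  apply: ge0_ler_powR; first lra'.
  - by rewrite nnegrE; exact: ltW.
  - by rewrite nnegrE; exact: powR_ge0.
  - by rewrite ge_min lexx orbT.
set s := b / (2 * L).
have Ls : L * s = b / 2 by rewrite /s; field; lra'.
have s0 : 0 < s by apply: divr_gt0 => //; lra'.
have s1 : s <= 1.
  rewrite /s ler_pdivrMr; last lra'. lra'.
have sxbc : s * `|x| = 2 * (b * c) by rewrite /s /c; field; lra'.
set d := if 0 < x then s else - s.
have hd : `|d| = s /\ d * x = s * `|x|.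
  rewrite /d; case: ifP => hx.
  - by rewrite gtr0_norm // gtr0_norm.
  - have hx' : x < 0.
      move: hx; rewrite ltNge => /negbFE; rewrite le_eqVlt => /orP[/eqP x00|//].
      by move: x0; rewrite x00 normr0 ltxx.
    by rewrite normrN gtr0_norm // ltr0_norm // mulrN mulNr.
have key t : `|t| <= T -> G t <= b / 2 -> f t + b * c <= f (t + d).
  move=> tT Gt.
  have [hd1 hd2] := hd.
  have hG := Glip t d tT (ltac:(by rewrite hd1)).
  rewrite hd1 Ls in hG.
  have : G (t + d) `^ p <= b `^ p.
    apply: ge0_ler_powR; [lra' | by rewrite nnegrE | by rewrite nnegrE; lra' | lra'].
  have := powR_ge0 (G t) p.
  rewrite /f mulrDl hd2; lra'.
have f0 : f 0 = 0 by rewrite /f Gz powR0 ?mul0r ?subr0 //; lra'.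
have Sge t : ((f t)%:E <= Fsup G p x)%E.
  by apply: ereal_sup_ubound; exists t.
have Sle : (Fsup G p x <= (T * `|x|)%:E)%E.
  by apply: ge_ereal_sup => _ [t _ <-]; rewrite lee_fin; case: (fle t).
have bc0 : 0 < b * c by apply: mulr_gt0.
have Spos : ((b * c)%:E <= Fsup G p x)%E.
  apply: le_trans (Sge (0 + d)); rewrite lee_fin.
  have := key 0; rewrite normr0 Gz f0 add0r; apply; [exact: ltW | lra'].
have Sfin : Fsup G p x \is a fin_num.
  rewrite ge0_fin_numE; last by apply: le_trans Spos; rewrite lee_fin; exact: ltW.
  by apply: le_lt_trans Sle _; exact: ltry.
split; first by apply: lt_le_trans Spos; rewrite lte_fin.
set r := q / p.
have r1 : 1 < r by rewrite /r ltr_pdivlMr // mul1r.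
set h := (2^-1 : R) `^ (r - 1).
have h1 : h < 1.
  rewrite lt_neqAle; apply/andP; split.
  - rewrite /h powR_eq1 negb_or negb_or; apply/and3P; split.
    + by apply/eqP => /(congr1 (fun z => z * 2)); rewrite mulVf ?mul1r //; lra'.
    + by rewrite -leNgt; lra'.
    + by apply/eqP; lra'.
  - rewrite /h -[X in _ <= X](powRr0 (2^-1 : R)); apply: ger_powR; [apply/andP; split; lra' | lra'].
set kap := (b / 2) `^ p * (1 - h).
have kap0 : 0 < kap by apply: mulr_gt0; [apply: powR_gt0; lra' | lra'].
set eps := Num.min (b * c) kap.
have eps0 : 0 < eps by rewrite lt_min bc0 kap0.
have [_ [t _ <-] ht] := ub_ereal_sup_adherent eps0 Sfin.
have Sge' := Sge.
have {}ht : (Fsup G p x - eps%:E < (f t)%:E)%E := ht.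
move: ht Sge' Spos; rewrite -(fineK Sfin); set S0 := fine _ => ht Sge' Spos'.
rewrite -EFinB lte_fin in ht; rewrite lee_fin in Spos'.
have Sge2 t' : f t' <= S0 by rewrite -lee_fin; exact: Sge'.
have epsbc : eps <= b * c by rewrite ge_min lexx.
have epsk : eps <= kap by rewrite ge_min lexx orbT.
have ft_pos : 0 < f t by lra'.
have tT : `|t| < T by case: (fle t) => _; apply.
have Gtb : b / 2 < G t.
  rewrite ltNge; apply/negP => Gle.
  have := key t (ltW tT) Gle; have := Sge2 (t + d); lra'.
set u := G t `^ p.
have u_le : u <= 2^-1.
  have := tx t; have : `|t| * `|x| <= T * `|x| by apply: ler_wpM2r => //; lra'.
  move: ft_pos; rewrite /f -/u; lra'.
have u_ge : (b / 2) `^ p <= u.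
  apply: ge0_ler_powR; [lra' | by rewrite nnegrE; lra' | by rewrite nnegrE | lra'].
have Gq : G t `^ q = u `^ r by rewrite /u -powRrM /r mulrC divfK //; lra'.
have ur : u `^ r = u * u `^ (r - 1) by rewrite mulr_powRB1 //; [exact: powR_ge0 | lra'].
have uh : u `^ (r - 1) <= h.
  apply: ge0_ler_powR; [lra' | by rewrite nnegrE; exact: powR_ge0 | by rewrite nnegrE; lra' | lra'].
have e1 : u * u `^ (r - 1) <= u * h by apply: ler_wpM2l => //; exact: powR_ge0.
have e2 : (b / 2) `^ p * (1 - h) <= u * (1 - h) by apply: ler_wpM2r => //; lra'.
apply: (@lt_le_trans _ _ ((t * x - G t `^ q)%:E)); last by apply: ereal_sup_ubound; exists t.
rewrite lte_fin Gq ur.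
move: ht; rewrite /f -/u -/kap in e2 *; lra'.
Qed.
Lemma expm1_le (R : realType) (d : R) : `|d| <= 1 -> expR d - 1 <= expR 1 * `|d|.
Proof.
move=> d1; have e1 : 0 < expR 1 := expR_gt0 1.
case: (leP 0 d) => hd.
- rewrite ger0_norm //.
  have h1 := expR_ge1Dx (- d).
  have h2 : expR d * (1 - d) <= 1.
    have : expR d * (1 - d) <= expR d * expR (- d).
      by apply: ler_wpM2l; [exact: expR_ge0 | lra'].
    by rewrite -expRD subrr expR0.
  have h3 : expR d <= expR 1 by rewrite ler_expR; move: d1; rewrite ger0_norm //.
  have h4 : d * expR d <= d * expR 1 by apply: ler_wpM2l.
  lra'.
- have : expR d < 1 by rewrite expR_lt1.
  have := normr_ge0 d; move=> h0 h; have : 0 <= expR 1 * `|d| by apply: mulr_ge0 => //; exact: ltW.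
  lra'.
Qed.

Lemma expdiff (R : realType) (t d T : R) : `|t| <= T -> `|d| <= 1 ->
  expR (t + d) - expR t <= expR T * expR 1 * `|d|.
Proof.
move=> tT d1; rewrite expRD.
have h1 := expm1_le d1.
have h2 : expR t <= expR T by rewrite ler_expR; apply: le_trans tT; exact: ler_norm.
have h3 : expR t * (expR d - 1) <= expR t * (expR 1 * `|d|).
  by apply: ler_wpM2l => //; exact: expR_ge0.
have h4 : expR t * (expR 1 * `|d|) <= expR T * (expR 1 * `|d|).
  by apply: ler_wpM2r => //; rewrite mulr_ge0 // expR_ge0.
rewrite -mulrA; lra'.
Qed.

Lemma expdiffN (R : realType) (t d T : R) : `|t| <= T -> `|d| <= 1 ->
  expR (- (t + d)) - expR (- t) <= expR T * expR 1 * `|d|.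
Proof.
move=> tT d1; rewrite opprD -(normrN d); apply: expdiff; by rewrite normrN.
Qed.
Definition G1 (R : realType) (l1 l2 t : R) :=
  Num.max (l1 * (expR t - 1)) (l2 * (expR (- t) - 1)).
Definition G2 (R : realType) (l1 l2 t : R) :=
  Num.max (l1 * (expR t - 1) + l2 * (expR (- t) - 1)) 0.

Lemma G1_lip (R : realType) (l1 l2 T t d : R) : 0 < l1 -> 0 < l2 ->
  `|t| <= T -> `|d| <= 1 ->
  G1 l1 l2 (t + d) <= G1 l1 l2 t + (expR T * expR 1 * (l1 + l2) + 1) * `|d|.
Proof.
move=> l10 l20 tT d1.
have e1 := expdiff tT d1; have e2 := expdiffN tT d1.
have K0 : 0 <= expR T * expR 1 * `|d| by rewrite !mulr_ge0 // expR_ge0.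
have a1 := ler_wpM2l (ltW l10) e1; have a2 := ler_wpM2l (ltW l20) e2.
have k1 : 0 <= l1 * (expR T * expR 1 * `|d|) by rewrite mulr_ge0 //; lra'.
have k2 : 0 <= l2 * (expR T * expR 1 * `|d|) by rewrite mulr_ge0 //; lra'.
have hA : l1 * (expR t - 1) <= G1 l1 l2 t by rewrite /G1 le_max lexx.
have hB : l2 * (expR (- t) - 1) <= G1 l1 l2 t by rewrite /G1 le_max lexx orbT.
have d0 := normr_ge0 d.
rewrite {1}/G1 ge_max; apply/andP; split; lra'.
Qed.

Lemma G2_lip (R : realType) (l1 l2 T t d : R) : 0 < l1 -> 0 < l2 ->
  `|t| <= T -> `|d| <= 1 ->
  G2 l1 l2 (t + d) <= G2 l1 l2 t + (expR T * expR 1 * (l1 + l2) + 1) * `|d|.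
Proof.
move=> l10 l20 tT d1.
have e1 := expdiff tT d1; have e2 := expdiffN tT d1.
have K0 : 0 <= expR T * expR 1 * `|d| by rewrite !mulr_ge0 // expR_ge0.
have a1 := ler_wpM2l (ltW l10) e1; have a2 := ler_wpM2l (ltW l20) e2.
have k1 : 0 <= l1 * (expR T * expR 1 * `|d|) by rewrite mulr_ge0 //; lra'.
have k2 : 0 <= l2 * (expR T * expR 1 * `|d|) by rewrite mulr_ge0 //; lra'.
have hA : l1 * (expR t - 1) + l2 * (expR (- t) - 1) <= G2 l1 l2 t by rewrite /G2 le_max lexx.
have hB : 0 <= G2 l1 l2 t by rewrite /G2 le_max lexx orbT.
have d0 := normr_ge0 d.
rewrite {1}/G2 ge_max; apply/andP; split; lra'.
Qed.

Lemma G1_ge0 (R : realType) (l1 l2 t : R) : 0 < l1 -> 0 < l2 -> 0 <= G1 l1 l2 t.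
Proof.
move=> l10 l20; rewrite /G1 le_max; case: (leP 0 t) => ht.
- by rewrite mulr_ge0 //; [lra' | rewrite subr_ge0 -expR0 ler_expR].
- by rewrite orbC mulr_ge0 //; [lra' | rewrite subr_ge0 -expR0 ler_expR; lra'].
Qed.

Lemma G2_ge0 (R : realType) (l1 l2 t : R) : 0 <= G2 l1 l2 t.
Proof. by rewrite /G2 le_max lexx orbT. Qed.

Lemma G1_0 (R : realType) (l1 l2 : R) : G1 l1 l2 0 = 0.
Proof. by rewrite /G1 oppr0 expR0 subrr !mulr0 maxxx. Qed.

Lemma G2_0 (R : realType) (l1 l2 : R) : G2 l1 l2 0 = 0.
Proof. by rewrite /G2 oppr0 expR0 subrr !mulr0 addr0 maxxx. Qed.

Lemma G1_lb (R : realType) (l1 l2 t : R) : 0 < l1 -> 0 < l2 ->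
  (0 <= t -> l1 * (expR t - 1) - l2 <= G1 l1 l2 t) /\
  (t <= 0 -> l2 * (expR (- t) - 1) - l1 <= G1 l1 l2 t).
Proof.
move=> l10 l20.
have hA : l1 * (expR t - 1) <= G1 l1 l2 t by rewrite /G1 le_max lexx.
have hB : l2 * (expR (- t) - 1) <= G1 l1 l2 t by rewrite /G1 le_max lexx orbT.
by split => _; lra'.
Qed.

Lemma G2_lb (R : realType) (l1 l2 t : R) : 0 < l1 -> 0 < l2 ->
  (0 <= t -> l1 * (expR t - 1) - l2 <= G2 l1 l2 t) /\
  (t <= 0 -> l2 * (expR (- t) - 1) - l1 <= G2 l1 l2 t).
Proof.
move=> l10 l20.
have hA : l1 * (expR t - 1) + l2 * (expR (- t) - 1) <= G2 l1 l2 t by rewrite /G2 le_max lexx.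
have e1 := expR_ge0 t; have e2 := expR_ge0 (- t).
have m1 := ler_wpM2l (ltW l10) e1; have m2 := ler_wpM2l (ltW l20) e2.
rewrite mulr0 in m1 m2.
by split => _; lra'.
Qed.
Lemma Ggrow (R : realType) (G : R -> R) (l1 l2 : R) : 0 < l1 -> 0 < l2 ->
  (forall t, (0 <= t -> l1 * (expR t - 1) - l2 <= G t) /\
             (t <= 0 -> l2 * (expR (- t) - 1) - l1 <= G t)) ->
  forall t, 2 * (1 + l1 + l2) / Num.min l1 l2 <= `|t| ->
    1 <= G t /\ Num.min l1 l2 / 2 * `|t| <= G t.
Proof.
move=> l10 l20 Glb t.
set m0 := Num.min l1 l2.
have m00 : 0 < m0 by rewrite lt_min l10 l20.
have m1 : m0 <= l1 by rewrite ge_min lexx.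
have m2 : m0 <= l2 by rewrite ge_min lexx orbT.
rewrite ler_pdivrMr // => hT.
have [Gp Gn] := Glb t.
case: (leP 0 t) => ht.
- rewrite ger0_norm // in hT *.
  have e := expR_ge1Dx t.
  have a1 : l1 * t <= l1 * (expR t - 1) by apply: ler_wpM2l; lra'.
  have a2 : m0 * t <= l1 * t by apply: ler_wpM2r.
  have := Gp ht; split; lra'.
- rewrite ltr0_norm // in hT *.
  have e := expR_ge1Dx (- t).
  have a1 : l2 * (- t) <= l2 * (expR (- t) - 1) by apply: ler_wpM2l; lra'.
  have a2 : m0 * (- t) <= l2 * (- t) by apply: ler_wpM2r; lra'.
  have := Gn (ltW ht); split; lra'.
Qed.

Lemma Psi1E (R : realType) (l1 l2 nu : R) : 0 < l1 -> 0 < l2 ->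
  Psi1 l1 l2 nu = fun t => G1 l1 l2 t `^ nu^-1.
Proof.
move=> l10 l20; apply: funext => t; rewrite /Psi1 /G1.
have e1 := expR_ge0 t; have e2 := expR_ge0 (- t).
case: ifP => ht.
- rewrite max_l //.
  have : expR (- t) <= 1 by rewrite expR_le1; lra'.
  have : 1 <= expR t by rewrite -expR0 ler_expR.
  move=> h1 h2.
  have := ler_wpM2l (ltW l10) (_ : 0 <= expR t - 1); have := ler_wpM2l (ltW l20) (_ : expR (- t) - 1 <= 0).
  rewrite !mulr0 => H1 H2; have := H1 ltac:(lra'); have := H2 ltac:(lra'); lra'.
- have ht' : t < 0 by rewrite ltNge ht.
  rewrite max_r //.
  have : expR t <= 1 by rewrite expR_le1; lra'.
  have : 1 <= expR (- t) by rewrite -expR0 ler_expR; lra'.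
  move=> h1 h2.
  have := ler_wpM2l (ltW l10) (_ : expR t - 1 <= 0); have := ler_wpM2l (ltW l20) (_ : 0 <= expR (- t) - 1).
  rewrite !mulr0 => H1 H2; have := H1 ltac:(lra'); have := H2 ltac:(lra'); lra'.
Qed.

Lemma Psi2E (R : realType) (l1 l2 nu : R) : nu != 0 ->
  Psi2 l1 l2 nu = fun t => G2 l1 l2 t `^ nu^-1.
Proof.
move=> nu0; apply: funext => t; rewrite /Psi2 /G2 /=.
case: ifP => h; first by rewrite max_l.
rewrite max_r ?powR0 ?invr_eq0 //.
by move/negbT: h; rewrite -ltNge => /ltW.
Qed.
Lemma final (R : realType) (G : R -> R) (l1 l2 p q : R) :
  0 < l1 -> 0 < l2 -> 1 < p -> p < q ->
  (forall t, 0 <= G t) -> G 0 = 0 ->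
  (forall t, (0 <= t -> l1 * (expR t - 1) - l2 <= G t) /\
             (t <= 0 -> l2 * (expR (- t) - 1) - l1 <= G t)) ->
  (forall t d, `|t| <= 2 * (1 + l1 + l2) / Num.min l1 l2 -> `|d| <= 1 ->
     G (t + d) <= G t + (expR (2 * (1 + l1 + l2) / Num.min l1 l2) * expR 1 * (l1 + l2) + 1) * `|d|) ->
  Fsup G q 0 = 0%E /\ Fsup G p 0 = 0%E /\
  exists delta : R, 0 < delta /\
    forall x : R, 0 < `|x| < delta ->
      (Fsup G p x < Fsup G q x)%E /\ (0 < Fsup G p x)%E.
Proof.
move=> l10 l20 p1 pq G0 Gz Glb Glip.
split; first by apply: Fsup0 => //; apply/eqP => q0; lra'.
split; first by apply: Fsup0 => //; apply/eqP => q0; lra'.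
set m0 := Num.min l1 l2.
have m00 : 0 < m0 by rewrite lt_min l10 l20.
set T := 2 * (1 + l1 + l2) / m0.
have T0 : 0 < T by apply: divr_gt0 => //; lra'.
set L := expR T * expR 1 * (l1 + l2) + 1.
have L1 : 1 <= L.
  have : 0 <= expR T * expR 1 * (l1 + l2) by rewrite !mulr_ge0 ?expR_ge0 //; lra'.
  rewrite /L; lra'.
exists (Num.min (m0 / 2) (2 * T)^-1); split.
  by rewrite lt_min divr_gt0 //= invr_gt0; lra'.
move=> x /andP[x0]; rewrite lt_min => /andP[xm xT].
have xT' : `|x| * T <= 2^-1.
  have : `|x| * (2 * T) < (2 * T)^-1 * (2 * T) by rewrite ltr_pM2r //; lra'.
  rewrite mulVf; last lra'.
  move=> h; rewrite -(ler_pM2r (_ : 0 < 2)) //.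
  rewrite mulVf; last lra'. lra'.
have [H1 H2] := Fsup_strict (m := m0 / 2) (L := L) T0 ltac:(lra') L1 p1 pq G0 Gz
  (Ggrow l10 l20 Glb) Glip x0 (ltW xm) xT'.
by split.
Qed.

Theorem proposition5p5 (R : realType) (l1 l2 nu eta : R) :
  0 < l1 -> 0 < l2 -> 0 < nu < 1 -> 0 < eta < 1 -> eta < nu ->
  forall k : nat, (k == 1%N) || (k == 2%N) ->
    ILD k l1 l2 eta 0 = 0%E /\ ILD k l1 l2 nu 0 = 0%E /\
    exists delta : R, 0 < delta /\
      forall x : R, 0 < `|x| < delta ->
        (ILD k l1 l2 nu x < ILD k l1 l2 eta x)%E /\ (0 < ILD k l1 l2 nu x)%E.
Proof.
move=> l10 l20 /andP[nu0 nu1] /andP[eta0 eta1] etanu k hk.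
have p1 : 1 < nu^-1 by rewrite invf_gt1.
have pq : nu^-1 < eta^-1 by rewrite ltf_pV2 ?posrE.
move: hk; case: k => [|[|[|k]]] // _.
- have I1 nu' x : ILD 1 l1 l2 nu' x = Fsup (G1 l1 l2) nu'^-1 x.
    by rewrite /ILD /= Psi1E.
  have [A [B [d [d0 Hd]]]] := final l10 l20 p1 pq (fun t => @G1_ge0 R l1 l2 t l10 l20) (G1_0 l1 l2)
    (fun t => @G1_lb R l1 l2 t l10 l20) (fun t d => @G1_lip R l1 l2 _ t d l10 l20).
  rewrite !I1; split => //; split => //; exists d; split => // x hx; rewrite !I1.
  exact: Hd.
- have I2 nu' x : nu' != 0 -> ILD 2 l1 l2 nu' x = Fsup (G2 l1 l2) nu'^-1 x.
    by move=> h; rewrite /ILD /= Psi2E.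
  have nun : nu != 0 by rewrite gt_eqF.
  have etan : eta != 0 by rewrite gt_eqF.
  have [A [B [d [d0 Hd]]]] := final l10 l20 p1 pq (@G2_ge0 R l1 l2) (G2_0 l1 l2)
    (fun t => @G2_lb R l1 l2 t l10 l20) (fun t d => @G2_lip R l1 l2 _ t d l10 l20).
  rewrite !I2 //; split => //; split => //; exists d; split => // x hx; rewrite !I2 //.
  exact: Hd.
Qed.
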